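(* For all $n\ge2$ and all $x,y\in\mathbb{H}^n$, $$\mathrm{th}\frac{\rho_{\mathbb{H}^n}(x,y)}{2}\le b_{\mathbb{H}^n,2}(x,y)\le\sqrt2\,\mathrm{th}\frac{\rho_{\mathbb{H}^n}(x,y)}{2},$$ and the constants $1$ and $\sqrt2$ are the best possible.
   Context: $\mathbb{H}^n=\{(x_1,\dots,x_n)\in\mathbb{R}^n:x_n>0\}$ is the upper half-space, and $d_{\mathbb{H}^n}(x)=x_n$ is the distance to its boundary. The hyperbolic metric of $\mathbb{H}^n$ is given by $\mathrm{ch}\,\rho_{\mathbb{H}^n}(x,y)=1+\frac{|x-y|^2}{2d_{\mathbb{H}^n}(x)d_{\mathbb{H}^n}(y)}$. For a domain $G\subsetneq\mathbb{R}^n$ and $p\ge1$, the Barrlund metric is $b_{G,p}(x,y)=\sup_{z\in\partial G}\frac{|x-y|}{(|x-z|^p+|z-y|^p)^{1/p}}$. *)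

(* Defs.v *)
From HB Require Import structures.
From mathcomp Require Import all_boot all_order all_algebra.
From mathcomp Require Import all_classical all_reals all_analysis.
Set Implicit Arguments. Unset Strict Implicit. Unset Printing Implicit Defensive.
Import Order.TTheory GRing.Theory Num.Theory.
Local Open Scope classical_set_scope.
Local Open Scope ring_scope.

Section Defs.
Variable R : realType.

Definition enorm n (x : 'rV[R]_n) : R := Num.sqrt (\sum_(i < n) (x 0 i) ^+ 2).

(* last coordinate x_n (indices are 0..n-1, so x_n is the entry of index n-1) *)
Definition lastc n (x : 'rV[R]_n) : R := \sum_(i < n | i.+1 == n) x 0 i.

Definition Hn n : set 'rV[R]_n := [set x | 0 < lastc x].
Definition dH n (x : 'rV[R]_n) : R := lastc x.

Definition bdry n (G : set 'rV[R]_n) : set 'rV[R]_n :=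
  [set z | forall e : R, 0 < e ->
     (exists u, G u /\ enorm (u - z) < e) /\ (exists v, ~ G v /\ enorm (v - z) < e)].

Definition ch (t : R) : R := (expR t + expR (- t)) / 2.
Definition sh (t : R) : R := (expR t - expR (- t)) / 2.
Definition th (t : R) : R := sh t / ch t.
Definition arch (s : R) : R := ln (s + Num.sqrt (s ^+ 2 - 1)).

(* hyperbolic metric of H^n: ch rho = 1 + |x-y|^2 / (2 x_n y_n), rho >= 0 *)
Definition rhoH n (x y : 'rV[R]_n) : R :=
  arch (1 + (enorm (x - y)) ^+ 2 / (2 * dH x * dH y)).

Definition barrlund n (G : set 'rV[R]_n) (p : R) (x y : 'rV[R]_n) : R :=
  sup [set r | exists2 z, bdry G z &
        r = enorm (x - y) / powR (powR (enorm (x - z)) p + powR (enorm (z - y)) p) p^-1].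

End Defs.

(* Main.v *)
Require Import Defs.
From HB Require Import structures.
From mathcomp Require Import all_boot all_order all_algebra.
From mathcomp Require Import all_classical all_reals all_analysis.
From mathcomp Require Import ring lra.
Import Order.TTheory GRing.Theory Num.Theory.
Local Open Scope classical_set_scope.
Local Open Scope ring_scope.

Section Aux.
Variable R : realType.
Variable k : nat.
Notation V := ('rV[R]_k.+1).

Lemma lastcE (x : V) : lastc x = x 0 ord_max.
Proof.
by rewrite /lastc (big_pred1 ord_max) // => i /=.
Qed.

Lemma enorm_sq (w : V) : enorm w ^+ 2 = \sum_i w 0 i ^+ 2.
Proof. by rewrite sqr_sqrtr // sumr_ge0 // => i _; exact: sqr_ge0. Qed.

Lemma enorm_ge0 (w : V) : 0 <= enorm w.
Proof. exact: sqrtr_ge0. Qed.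

Lemma enorm1 (w : V) j : (forall i, i != j -> w 0 i = 0) -> enorm w = `|w 0 j|.
Proof.
move=> H; rewrite /enorm (bigD1 j) //= big1 ?addr0 ?sqrtr_sqr // => i /H ->.
by rewrite expr0n.
Qed.

Lemma lastc_le (w : V) : `|lastc w| <= enorm w.
Proof.
rewrite lastcE /enorm -sqrtr_sqr ler_sqrt; last first.
  by rewrite sumr_ge0 // => i _; exact: sqr_ge0.
rewrite (bigD1 ord_max) //= lerDl sumr_ge0 // => i _; exact: sqr_ge0.
Qed.

Lemma lastcB (u v : V) : lastc (u - v) = lastc u - lastc v.
Proof. by rewrite !lastcE !mxE. Qed.

Lemma bdry_last z : bdry (@Hn R k.+1) z -> lastc z = 0.
Proof.
move=> H; case: (ltgtP (lastc z) 0) => // h.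
- have hz : 0 < - lastc z by rewrite oppr_gt0.
  have [[u [Gu hu]] _] := H (- lastc z) hz.
  have := le_lt_trans (ler_norm _) (le_lt_trans (lastc_le (u - z)) hu).
  rewrite lastcB; move: Gu; rewrite /Hn /=; lra.
- have [_ [v [Gv hv]]] := H (lastc z) h.
  have := le_lt_trans (lastc_le (v - z)) hv.
  rewrite lastcB => h1.
  have := ler_norm (- (lastc v - lastc z)); rewrite normrN => h2.
  move: Gv; rewrite /Hn /= => Gv.
  have Gv' : lastc v <= 0 by rewrite leNgt; apply/negP.
  lra.
Qed.

Definition zs (x y : V) : V :=
  \row_i (if i == ord_max then 0 else (x 0 i + y 0 i) / 2).

Lemma sumD1 (F : 'I_k.+1 -> R) :
  \sum_i F i = F ord_max + \sum_(i | i != ord_max) F i.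
Proof. by rewrite (bigD1 ord_max). Qed.

Lemma Qlow (x y z : V) : lastc z = 0 ->
  ((lastc x + lastc y) ^+ 2 + enorm (x - y) ^+ 2) / 2 <=
  enorm (x - z) ^+ 2 + enorm (z - y) ^+ 2.
Proof.
rewrite !lastcE !enorm_sq !sumD1 !mxE => hz.
have h : (\sum_(i | i != ord_max) (x - y) 0 i ^+ 2) / 2 <=
  \sum_(i | i != ord_max) (x - z) 0 i ^+ 2 + \sum_(i | i != ord_max) (z - y) 0 i ^+ 2.
  rewrite -big_split /= mulr_suml; apply: ler_sum => i _.
  rewrite !mxE.
  set p := x 0 i; set q := y 0 i; set r := z 0 i.
  have -> : (p - r) ^+ 2 + (r - q) ^+ 2 = (p - q) ^+ 2 / 2 + (p + q - 2 * r) ^+ 2 / 2 by field.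
  by rewrite lerDl divr_ge0 // sqr_ge0.
move: h; rewrite hz.
set a := x 0 ord_max; set b := y 0 ord_max.
have e : (a - 0) ^+ 2 + (0 - b) ^+ 2 = ((a + b) ^+ 2 + (a - b) ^+ 2) / 2 by field.
lra.
Qed.

Lemma Qeq (x y : V) :
  enorm (x - zs x y) ^+ 2 + enorm (zs x y - y) ^+ 2 =
  ((lastc x + lastc y) ^+ 2 + enorm (x - y) ^+ 2) / 2.
Proof.
rewrite !lastcE !enorm_sq !sumD1 !mxE eqxx.
have h : (\sum_(i | i != ord_max) (x - y) 0 i ^+ 2) / 2 =
  \sum_(i | i != ord_max) (x - zs x y) 0 i ^+ 2 + \sum_(i | i != ord_max) (zs x y - y) 0 i ^+ 2.
  rewrite -big_split /= mulr_suml; apply: eq_bigr => i /negbTE hi.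
  by rewrite !mxE hi; field.
move: h.
set a := x 0 ord_max; set b := y 0 ord_max.
have e : (a - 0) ^+ 2 + (0 - b) ^+ 2 = ((a + b) ^+ 2 + (a - b) ^+ 2) / 2 by field.
lra.
Qed.

Lemma zs_bdry (x y : V) : bdry (@Hn R k.+1) (zs x y).
Proof.
move=> e e0; split.
- exists (\row_i (if i == ord_max then e / 2 else (x 0 i + y 0 i) / 2)); split.
    by rewrite /Hn /= lastcE mxE eqxx; lra.
  rewrite (enorm1 _ ord_max); last first.
    by move=> i /negbTE hi; rewrite !mxE hi subrr.
  rewrite !mxE eqxx subr0 ger0_norm; lra.
- exists (zs x y); split.
    by rewrite /Hn /= lastcE mxE eqxx ltxx.
  rewrite subrr (enorm1 _ ord_max) ?mxE ?normr0 // => i _; by rewrite mxE.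
Qed.

Lemma divsqrt_le (d P Q : R) : 0 <= d -> 0 < P -> P <= Q ->
  d / Num.sqrt Q <= d / Num.sqrt P.
Proof.
move=> d0 P0 PQ; apply: ler_wpM2l => //.
have Q0 : 0 < Q by apply: lt_le_trans PQ.
by rewrite lef_pV2 ?posrE ?sqrtr_gt0 // ler_sqrt // ltW.
Qed.

Lemma divsqrt_lt (d P Q : R) : 0 < d -> 0 < P -> P < Q ->
  d / Num.sqrt Q < d / Num.sqrt P.
Proof.
move=> d0 P0 PQ; rewrite ltr_pM2l //.
have Q0 : 0 < Q by apply: lt_trans PQ.
by rewrite ltf_pV2 ?posrE ?sqrtr_gt0 // ltr_sqrt.
Qed.

Lemma mul_divsqrt (c d P : R) : 0 < c -> 0 < P ->
  c * (d / Num.sqrt P) = d / Num.sqrt (P / c ^+ 2).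
Proof.
move=> c0 P0; rewrite sqrtrM ?(ltW P0) // sqrtrV ?exprn_ge0 ?(ltW c0) //.
rewrite sqrtr_sqr ger0_norm ?(ltW c0) //.
have : Num.sqrt P != 0 by rewrite gt_eqF // sqrtr_gt0.
have : c != 0 by rewrite gt_eqF.
move=> h1 h2; field; by rewrite h1 h2.
Qed.

Lemma barr_val (x y : V) : Hn x -> Hn y ->
  barrlund (@Hn R k.+1) 2 x y =
  enorm (x - y) / Num.sqrt (((lastc x + lastc y) ^+ 2 + enorm (x - y) ^+ 2) / 2).
Proof.
rewrite /Hn /= => hx hy.
set Qs := (_ / 2).
have Qs0 : 0 < Qs by rewrite /Qs; have := sqr_ge0 (enorm (x - y)); nra.
have elt : forall z, (powR (powR (enorm (x - z)) 2 + powR (enorm (z - y)) 2) 2^-1) =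
   Num.sqrt (enorm (x - z) ^+ 2 + enorm (z - y) ^+ 2).
  move=> z; rewrite !powR_mulrn ?enorm_ge0 // powR12_sqrt //.
  by rewrite addr_ge0 // sqr_ge0.
rewrite /barrlund; apply: le_anti; apply/andP; split.
- apply: ge_sup.
    by exists (enorm (x - y) / Num.sqrt Qs); exists (zs x y); rewrite ?elt ?Qeq //; exact: zs_bdry.
  move=> r [z zb ->]; rewrite elt; apply: divsqrt_le => //; first exact: enorm_ge0.
  by rewrite /Qs; apply: Qlow; apply: bdry_last zb.
- apply: ub_le_sup.
    exists (enorm (x - y) / Num.sqrt Qs) => r [z zb ->]; rewrite elt.
    apply: divsqrt_le => //; first exact: enorm_ge0.
    by rewrite /Qs; apply: Qlow; apply: bdry_last zb.
  by exists (zs x y); rewrite ?elt ?Qeq //; exact: zs_bdry.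
Qed.


Lemma thA (u : R) : 0 <= u -> th (arch (1 + u) / 2) = Num.sqrt (u / (u + 2)).
Proof.
move=> u0; rewrite /arch.
set r := Num.sqrt ((1 + u) ^+ 2 - 1).
have r0 : 0 <= r by exact: sqrtr_ge0.
have r2 : r ^+ 2 = (1 + u) ^+ 2 - 1 by rewrite sqr_sqrtr //; nra.
set E := 1 + u + r.
have E1 : 1 <= E by rewrite /E; lra.
set t := ln E.
have hE : expR t = E by rewrite /t lnK // posrE; lra.
rewrite /th /sh /ch expRN.
set h := expR (t / 2).
have hh : h * h = E.
  by rewrite /h -expRD -hE; congr expR; field.
have h0 : 0 < h by exact: expR_gt0.
have T : ((h - h^-1) / 2) / ((h + h^-1) / 2) = (u + r) / (2 + u + r).
  have hn : h != 0 by rewrite gt_eqF.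
  have hs : h * h + 1 != 0 by rewrite gt_eqF //; nra.
  have hs2 : 2 + u + r != 0 by rewrite gt_eqF //; lra.
  have -> : (h - h^-1) / 2 / ((h + h^-1) / 2) = (h * h - 1) / (h * h + 1).
    by field; rewrite hn hs.
  rewrite hh /E.
  have -> : 1 + u + r + 1 = 2 + u + r by ring.
  by have -> : 1 + u + r - 1 = u + r by ring.
rewrite T.
have W0 : 0 <= (u + r) / (2 + u + r) by rewrite divr_ge0 //; lra.
rewrite -[X in X = _](ger0_norm W0) -sqrtr_sqr; congr Num.sqrt.
rewrite expr_div_n; apply/eqP; rewrite eqr_div; last 2 first.
- by rewrite gt_eqF //; apply: exprn_gt0; lra.
- by rewrite gt_eqF //; lra.
apply/eqP.
have id : (u + r) ^+ 2 * (u + 2) - u * (2 + u + r) ^+ 2 = 2 * (r ^+ 2 - ((1 + u) ^+ 2 - 1)) by ring.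
rewrite r2 subrr mulr0 in id.
by apply/eqP; rewrite -subr_eq0 id.
Qed.

Lemma thval (x y : V) : Hn x -> Hn y ->
  th (rhoH x y / 2) =
  enorm (x - y) / Num.sqrt (enorm (x - y) ^+ 2 + 4 * lastc x * lastc y).
Proof.
rewrite /Hn /= /rhoH /dH.
set a := lastc x; set b := lastc y; set d := enorm (x - y) => hx hy.
have d0 : 0 <= d by exact: enorm_ge0.
rewrite thA; last by rewrite divr_ge0 ?sqr_ge0 //; nra.
have -> : d ^+ 2 / (2 * a * b) / (d ^+ 2 / (2 * a * b) + 2) = d ^+ 2 / (d ^+ 2 + 4 * a * b).
  have an : a != 0 by rewrite gt_eqF.
  have bn : b != 0 by rewrite gt_eqF.
  have pn : d ^+ 2 + 4 * a * b != 0 by rewrite gt_eqF //; have := sqr_ge0 d; nra.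
  field; rewrite an bn /=; apply/andP; split => //; rewrite gt_eqF //; have := sqr_ge0 d; nra.
rewrite sqrtrM ?sqr_ge0 // sqrtr_sqr ger0_norm // sqrtrV //.
have := sqr_ge0 d; nra.
Qed.

End Aux.

Theorem lemma3p7 (R : realType) (n : nat) (hn : (2 <= n)%N) :
  (forall x y : 'rV[R]_n, Hn x -> Hn y ->
     th (rhoH x y / 2) <= barrlund (@Hn R n) 2 x y /\
     barrlund (@Hn R n) 2 x y <= Num.sqrt 2 * th (rhoH x y / 2)) /\
  (forall c : R, 1 < c -> exists x y : 'rV[R]_n, [/\ Hn x, Hn y &
     barrlund (@Hn R n) 2 x y < c * th (rhoH x y / 2)]) /\
  (forall c : R, c < Num.sqrt 2 -> exists x y : 'rV[R]_n, [/\ Hn x, Hn y &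
     c * th (rhoH x y / 2) < barrlund (@Hn R n) 2 x y]).
Proof.
case: n hn => [|[|m]] // _.
have s2 : Num.sqrt 2 ^+ 2 = 2 :> R by rewrite sqr_sqrtr.
have s20 : 0 < Num.sqrt 2 :> R by rewrite sqrtr_gt0.
split; [|split].
- move=> x y hx hy; rewrite barr_val // thval //.
  move: hx hy; rewrite /Hn /=.
  set a := lastc x; set b := lastc y; set d := enorm (x - y) => ha hb.
  have d0 : 0 <= d by exact: enorm_ge0.
  have hab : (a - b) ^+ 2 <= d ^+ 2.
    have h1 := @lastc_le _ _ (x - y); rewrite lastcB -/a -/b -/d in h1.
    have h2 := real_normK (num_real (a - b)).
    have h3 := normr_ge0 (a - b).
    nra.
  have := sqr_ge0 d; have := mulr_gt0 ha hb; have := sqr_ge0 (a - b) => q1 q2 q3.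
  split.
  + apply: divsqrt_le => //; nra.
  + rewrite mul_divsqrt ?s2 //; last by nra.
  + apply: divsqrt_le => //; nra.
- move=> c c1.
  have c0 : 0 < c by lra.
  set kk := c ^+ 2 - 1.
  have k0 : 0 < kk by rewrite /kk; nra.
  have ec : c ^+ 2 = kk + 1 by rewrite /kk; ring.
  set A := 2 / kk + 1.
  have kA : kk * A = 2 + kk by rewrite /A; field; rewrite gt_eqF.
  have A1 : 1 < A by rewrite /A ltrDr divr_gt0.
  pose x : 'rV[R]_(m.+2) := \row_i (if i == ord_max then A else 0).
  pose y : 'rV[R]_(m.+2) := \row_i (if i == ord_max then 1 else 0).
  have ex : lastc x = A by rewrite lastcE mxE eqxx.
  have ey : lastc y = 1 by rewrite lastcE mxE eqxx.
  have ed : enorm (x - y) = A - 1.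
    rewrite (@enorm1 _ _ _ ord_max) => [|i /negbTE hi]; last by rewrite !mxE hi subrr.
    by rewrite !mxE eqxx ger0_norm //; lra.
  have hx : Hn x by rewrite /Hn /= ex; lra.
  have hy : Hn y by rewrite /Hn /= ey; lra.
  exists x, y; split => //.
  rewrite barr_val // thval // ex ey ed.
  rewrite mul_divsqrt //; last by nra.
  apply: divsqrt_lt; first lra.
    by apply: divr_gt0; nra.
  rewrite ltr_pdivrMr; last by nra.
  rewrite ec.
  have : 0 < A * kk by apply: mulr_gt0; lra.
  have : A * (kk * A) = A * (2 + kk) by rewrite kA.
  lra.
- move=> c c2.
  pose x : 'rV[R]_(m.+2) := \row_i (if i == ord_max then 1 else 0).
  pose y : 'rV[R]_(m.+2) := \row_i (if i == ord_max then 1 else if i == ord0 then 1 else 0).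
  have ex : lastc x = 1 by rewrite lastcE mxE eqxx.
  have ey : lastc y = 1 by rewrite lastcE mxE eqxx.
  have ed : enorm (x - y) = 1.
    rewrite (@enorm1 _ _ _ ord0) => [|i /negbTE hi]; last first.
      by rewrite !mxE hi; case: (i == ord_max); rewrite subrr.
    by rewrite !mxE /= sub0r normrN normr1.
  have hx : Hn x by rewrite /Hn /= ex; lra.
  have hy : Hn y by rewrite /Hn /= ey; lra.
  exists x, y; split => //.
  rewrite barr_val // thval // ex ey ed.
  have e : ((1 + 1) ^+ 2 + 1 ^+ 2) / 2 = (1 ^+ 2 + 4 * 1 * 1) / Num.sqrt 2 ^+ 2 :> R.
    by rewrite s2; field.
  rewrite e -mul_divsqrt //.
  have T0 : 0 < 1 / Num.sqrt (1 ^+ 2 + 4 * 1 * 1) :> R.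
    by apply: divr_gt0 => //; rewrite sqrtr_gt0; lra.
  by rewrite ltr_pM2r.
Qed.
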